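(* Let $(V,\le,\preccurlyeq)$ be a mixed lattice vector space equipped with a vector topology $\tau$. The following are equivalent: (a) every neighborhood of zero contains a type 2 mixed-full neighborhood of zero; (b) every neighborhood of zero contains a neighborhood $W$ of zero such that $y\in W$ and $0\le x\preccurlyeq y$ imply $x\in W$; (c) every neighborhood of zero contains a type 1 mixed-full neighborhood of zero; (d) every neighborhood of zero contains a neighborhood $W$ of zero such that $y\in W$ and $0\preccurlyeq x\le y$ imply $x\in W$.
   Context: A mixed lattice vector space $(V,\le,\preccurlyeq)$ is a real vector space $V$ with two partial orderings $\le$ (initial order) and $\preccurlyeq$ (specific order), each making $V$ a partially ordered vector space, with positive cones $V_p=\{x:0\le x\}$, $V_{sp}=\{x:0\preccurlyeq x\}$, such that: (1) for all $x,y$ the elements $x\curlyvee y=\min\{w: w\succcurlyeq x,\ w\ge y\}$ and $x\curlywedge y=\max\{w: w\preccurlyeq x,\ w\le y\}$ exist (min/max with respect to $\le$); (2) $x\preccurlyeq y$ implies $x\le y$; (3) $x\curlyvee y, x\curlywedge y\in V_{sp}$ whenever $x,y\in V_{sp}$. For $A\subseteq V$ let $MF_1(A)=\{y\in V: x\preccurlyeq y\le z \text{ for some } x,z\in A\}$ and $MF_2(A)=\{y\in V: x\le y\preccurlyeq z \text{ for some } x,z\in A\}$. A set $A$ is type 1 mixed-full if $A=MF_1(A)$, and type 2 mixed-full if $A=MF_2(A)$. *)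

(* Defs.v *)
From HB Require Import structures.
From mathcomp Require Import all_boot all_order all_algebra.
From mathcomp Require Import all_classical all_reals all_analysis.
Set Implicit Arguments. Unset Strict Implicit. Unset Printing Implicit Defensive.
Import Order.TTheory GRing.Theory Num.Theory.
Local Open Scope ring_scope.
Local Open Scope classical_set_scope.

Section MixedLattice.
Variables (R : realType) (V : lmodType R).

Definition ordered_vector_space (le : V -> V -> Prop) : Prop :=
  [/\ (forall x, le x x),
      (forall x y, le x y -> le y x -> x = y),
      (forall x y z, le x y -> le y z -> le x z),
      (forall x y z, le x y -> le (x + z) (y + z)) &
      (forall (a : R) x y, 0 <= a -> le x y -> le (a *: x) (a *: y))].

Definition is_min_wrt (le : V -> V -> Prop) (S : set V) (w : V) : Prop :=
  S w /\ forall w', S w' -> le w w'.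

Definition is_max_wrt (le : V -> V -> Prop) (S : set V) (w : V) : Prop :=
  S w /\ forall w', S w' -> le w' w.

(* upper mixed envelope  x ⋎ y = min_{<=} {w | x ≼ w, y <= w} *)
Definition mixed_upper (le sle : V -> V -> Prop) (x y : V) : set V :=
  [set w | sle x w /\ le y w].
(* lower mixed envelope  x ⋏ y = max_{<=} {w | w ≼ x, w <= y} *)
Definition mixed_lower (le sle : V -> V -> Prop) (x y : V) : set V :=
  [set w | sle w x /\ le w y].

(* (V, le, sle) is a mixed lattice vector space: le is the initial order,
   sle the specific order. *)
Definition mixed_lattice_vector_space (le sle : V -> V -> Prop) : Prop :=
  [/\ ordered_vector_space le /\ ordered_vector_space sle,
      (forall x y, exists w, is_min_wrt le (mixed_upper le sle x y) w),
      (forall x y, exists w, is_max_wrt le (mixed_lower le sle x y) w),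
      (forall x y, sle x y -> le x y) &
      (forall x y w, sle 0 x -> sle 0 y ->
         (is_min_wrt le (mixed_upper le sle x y) w -> sle 0 w) /\
         (is_max_wrt le (mixed_lower le sle x y) w -> sle 0 w))].

Definition MF1 (le sle : V -> V -> Prop) (A : set V) : set V :=
  [set y | exists x z, A x /\ A z /\ sle x y /\ le y z].
Definition MF2 (le sle : V -> V -> Prop) (A : set V) : set V :=
  [set y | exists x z, A x /\ A z /\ le x y /\ sle y z].

Definition mixed_full1 (le sle : V -> V -> Prop) (A : set V) : Prop :=
  A = MF1 le sle A.
Definition mixed_full2 (le sle : V -> V -> Prop) (A : set V) : Prop :=
  A = MF2 le sle A.

End MixedLattice.

(* Main.v *)
Require Import Defs.
From HB Require Import structures.
From mathcomp Require Import all_boot all_order all_algebra.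
From mathcomp Require Import all_classical all_reals all_analysis.
Import Order.TTheory GRing.Theory Num.Theory.
Local Open Scope ring_scope.
Local Open Scope classical_set_scope.

Lemma sub0_nbhs (R : realType) (V : topologicalLmodType R) (U : set V) :
  nbhs (0:V) U -> exists W : set V, nbhs (0:V) W /\ forall a b, W a -> W b -> U (a - b).
Proof.
move=> hU.
have := @sub_continuous V (0, 0).
move=> /(_ U); rewrite /= subr0 => /(_ hU).
case=> /= -[A B] /= [hA hB] hAB.
exists (A `&` B); split; first exact: filterI.
by move=> a b [Aa _] [_ Bb]; exact: (hAB (a, b)).
Qed.

Lemma add0_nbhs (R : realType) (V : topologicalLmodType R) (U : set V) :
  nbhs (0:V) U -> exists W : set V, nbhs (0:V) W /\ forall a b, W a -> W b -> U (a + b).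
Proof.
move=> hU.
have := @add_continuous V (0, 0).
move=> /(_ U); rewrite /= addr0 => /(_ hU).
case=> /= -[A B] /= [hA hB] hAB.
exists (A `&` B); split; first exact: filterI.
by move=> a b [Aa _] [_ Bb]; exact: (hAB (a, b)).
Qed.

Section Gen.
Variables (R : realType) (V : topologicalLmodType R) (le1 le2 : V -> V -> Prop).
Hypothesis (h1 : ordered_vector_space le1) (h2 : ordered_vector_space le2).

Lemma tr1 x y : le1 x y -> le1 0 (y - x).
Proof. case: h1 => _ _ _ T _ /(T _ _ (- x)); by rewrite subrr. Qed.
Lemma tr2 x y z : le2 y z -> le2 (y - x) (z - x).
Proof. case: h2 => _ _ _ T _; exact: T. Qed.
Lemma tr2' x y : le2 0 x -> le2 (y - x) y.
Proof. case: h2 => _ _ _ T _ /(T _ _ (y - x)); by rewrite add0r [x + _]addrC subrK. Qed.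

Definition Aprop := forall U : set V, nbhs (0 : V) U ->
  exists W : set V, [/\ nbhs (0 : V) W, W `<=` U & mixed_full2 le1 le2 W].
Definition Bprop (l1 l2 : V -> V -> Prop) := forall U : set V, nbhs (0 : V) U ->
  exists W : set V, [/\ nbhs (0 : V) W, W `<=` U &
     forall x y, W y -> l1 0 x -> l2 x y -> W x].

Lemma MF2_sup W : W `<=` MF2 le1 le2 W.
Proof.
case: h1 => r1 _ _ _ _; case: h2 => r2 _ _ _ _.
by move=> x Wx; exists x, x.
Qed.

Lemma MF2_full W : mixed_full2 le1 le2 (MF2 le1 le2 W).
Proof.
apply/seteqP; split; first exact: MF2_sup.
case: h1 => _ _ t1 _ _; case: h2 => _ _ t2 _ _.
move=> y [x [z [[a [a' [Wa [Wa' [ax xa']]]]] [[b [b' [Wb [Wb' [bz zb']]]]] [xy yz]]]]].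
exists a, b'; split => //; split => //; split; [exact: t1 ax xy | exact: t2 yz zb'].
Qed.

Lemma AB : Aprop <-> Bprop le1 le2.
Proof.
split.
  move=> ha U hU; have [W [hW WU fW]] := ha U hU; exists W; split => //.
  move=> x y Wy l0x lxy; rewrite fW; exists 0, y; split; first exact: nbhs_singleton.
  by split.
move=> hb U hU.
have [W3 [hW3 W3U]] := @add0_nbhs R V _ hU.
have [W2 [hW2 W23 fW2]] := hb W3 hW3.
have [W1 [hW1 W1s]] := @sub0_nbhs R V _ hW2.
exists (MF2 le1 le2 W1); split; last exact: MF2_full.
  exact: filterS (@MF2_sup W1) hW1.
move=> y [x [z [Wx [Wz [xy yz]]]]].
have W10 : W1 0 by exact: nbhs_singleton.
have Wx2 : W2 x by have := W1s x 0 Wx W10; rewrite subr0.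
have Wyx : W2 (y - x) by apply: (fW2 _ (z - x)); [exact: W1s|exact: tr1|exact: tr2].
have -> : y = x + (y - x) by rewrite addrC subrK.
exact: W3U _ _ (W23 _ Wx2) (W23 _ Wyx).
Qed.

Lemma BD : Bprop le1 le2 -> Bprop le2 le1.
Proof.
move=> hb U hU.
have [U1 [hU1 U1s]] := @sub0_nbhs R V _ hU.
have [W [hW WU1 fW]] := hb U1 hU1.
exists (W `|` [set x | exists y, W y /\ le2 0 x /\ le1 x y]); split.
- by apply: filterS hW => x Wx; left.
- have W0 : W 0 by exact: nbhs_singleton.
  move=> x [Wx|[y [Wy [l0x lxy]]]].
    by have := U1s x 0 (WU1 _ Wx) (WU1 _ W0); rewrite subr0.
  have Wyx : W (y - x) by apply: (fW _ y) => //; [exact: tr1|exact: tr2'].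
  have -> : x = y - (y - x) by rewrite opprB addrC subrK.
  exact: U1s _ _ (WU1 _ Wy) (WU1 _ Wyx).
- case: h1 => r1 _ t1 _ _.
  move=> x y [Wy|[y' [Wy' [l0y lyy']]]] l0x lxy; right.
    by exists y.
  by exists y'; split => //; split => //; exact: t1 lxy lyy'.
Qed.

End Gen.

Theorem proposition3p6 (R : realType) (V : topologicalLmodType R)
  (le sle : V -> V -> Prop) :
  mixed_lattice_vector_space le sle ->
  let a := forall U : set V, nbhs (0 : V) U ->
             exists W : set V, [/\ nbhs (0 : V) W, W `<=` U & mixed_full2 le sle W] in
  let b := forall U : set V, nbhs (0 : V) U ->
             exists W : set V, [/\ nbhs (0 : V) W, W `<=` U &
               forall x y, W y -> le 0 x -> sle x y -> W x] in
  let c := forall U : set V, nbhs (0 : V) U ->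
             exists W : set V, [/\ nbhs (0 : V) W, W `<=` U & mixed_full1 le sle W] in
  let d := forall U : set V, nbhs (0 : V) U ->
             exists W : set V, [/\ nbhs (0 : V) W, W `<=` U &
               forall x y, W y -> sle 0 x -> le x y -> W x] in
  (a <-> b) /\ (a <-> c) /\ (a <-> d).
Proof.
case=> -[hl hs] _ _ _ _ a b c d.
have ab : a <-> b := @AB R V le sle hl hs.
have cd : c <-> d := @AB R V sle le hs hl.
have bd : b -> d := @BD R V le sle hl hs.
have db : d -> b := @BD R V sle le hs hl.
split; first exact: ab.
split; split.
- by move=> /ab /bd /cd.
- by move=> /cd /db /ab.
- by move=> /ab /bd.
- by move=> /db /ab.
Qed.
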